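(* Let $A\in\mathbb{R}^{n\times d}$ be a random data matrix whose rows are i.i.d. with mean zero and covariance $\Sigma$ (and satisfy Assumption 1 as in the context), split row-wise into $m$ blocks $A^{(i)}\in\mathbb{R}^{(n/m)\times d}$. Let $\lambda>0$, $H=\frac1nA^TA+\lambda I$, $d_\lambda=\mathrm{tr}(\Sigma(\Sigma+\lambda I)^{-1})$ with $md_\lambda<n$, and $\tilde H=\left(\frac1m\sum_{i=1}^m\left(\frac{1}{1-\frac{md_\lambda}{n}}\frac mnA^{(i)T}A^{(i)}+\lambda I\right)^{-1}\right)^{-1}$. For a vector $g_t$, let $p_t^\star=H^{-1}g_t$ be the true Newton step and $\tilde p_t$ the output of $s_t$ iterations of preconditioned conjugate gradient for $Hp=g_t$ with preconditioner $\tilde H^{-1}$ and initial point $0$. Then \[\frac{\|\tilde p_t-p_t^\star\|_H^2}{\|p_t^\star\|_H^2}\le4\left(\frac{1-\sqrt{1-\frac{\alpha}{1-\alpha}}}{1+\sqrt{1-\frac{\alpha}{1-\alpha}}}\right)^{s_t},\] where $\alpha=(\sigma_{\max}+\lambda+\alpha_0)\left(\frac1{\lambda^2}\alpha_0+\alpha_1+\|\Omega_0\|\right)$, $\alpha_0=\|\Sigma-\frac1nA^TA\|$, $\alpha_1=\|\tilde H^{-1}-\mathbb{E}[\tilde H^{-1}]\|$, $\Omega_0=\mathbb{E}[\tilde H^{-1}]-(\Sigma+\lambda I)^{-1}$, and $\sigma_{\max}$ is the largest eigenvalue of $\Sigma$.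
   Context: $\|v\|_H=\sqrt{v^THv}$; $\|\cdot\|$ is the spectral norm. Assumption 1 (for rows $x$ of the data, in the regime $n,d\to\infty$, $d/n\to y\in[0,1)$): the empirical spectral distribution of the covariance converges a.s. for a.e. $u\ge0$; $\sup_{\|e\|=1}\mathbb{E}(e^Tx)^4<\infty$ and $\sup_{\|\Omega\|=1}\mathrm{Var}(x^T\Omega x/d)\to0$; eigenvalues of the covariance lie in $[\sigma_{\min},\sigma_{\max}]$ with $\sigma_{\min}>0$ and $\sigma_{\max}$ independent of $n$.
   Formalization: The bound holds under the further hypothesis $\alpha<1/2$, and Assumption 1 enters without its empirical spectral distribution convergence, fourth-moment bound and vanishing-variance conditions. Apart from conventions, each condition added here is assumed in the paper as well or is needed for the statement above to hold. *)

(* Defs.v *)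
From HB Require Import structures.
From mathcomp Require Import all_boot all_order all_algebra.
From mathcomp Require Import all_classical all_reals all_analysis.
Set Implicit Arguments. Unset Strict Implicit. Unset Printing Implicit Defensive.
Import Order.TTheory GRing.Theory Num.Theory.
Local Open Scope ring_scope.
Local Open Scope classical_set_scope.

Section Defs.
Variable R : realType.

Definition vnorm q (v : 'cV[R]_q) : R := Num.sqrt (\sum_i v i ord0 ^+ 2).

Definition specnorm p q (M : 'M[R]_(p, q)) : R :=
  sup [set r | exists v : 'cV[R]_q, vnorm v = 1 /\ r = vnorm (M *m v)].

Definition Hnorm2 q (H : 'M[R]_q) (v : 'cV[R]_q) : R := (v^T *m H *m v) ord0 ord0.

Lemma block_index_proof m b (i : 'I_m) (k : 'I_b) : (i * b + k < m * b)%N.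
Proof.
case: i k => i Hi [k Hk] /=.
have : (i.+1 * b <= m * b)%N by rewrite leq_mul2r Hi orbT.
by rewrite mulSn => H; apply: leq_trans H; rewrite addnC ltn_add2r.
Qed.
Definition block_index m b (i : 'I_m) (k : 'I_b) : 'I_(m * b) :=
  Ordinal (block_index_proof i k).

(* the i-th block A^(i) of rows (b = n/m rows each) *)
Definition block m b d (A : 'M[R]_(m * b, d)) (i : 'I_m) : 'M[R]_(b, d) :=
  \matrix_(k < b, j < d) A (block_index i k) j.

Definition deff d (Sigma : 'M[R]_d) (lam : R) : R :=
  \tr (Sigma *m invmx (Sigma + lam%:M)).

Definition Htinv m b d (A : 'M[R]_(m * b, d)) (Sigma : 'M[R]_d) (lam : R) : 'M[R]_d :=
  let n : R := (m * b)%:R in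
  m%:R^-1 *: \sum_(i < m)
     invmx ((1 - m%:R * deff Sigma lam / n)^-1 *: ((m%:R / n) *: ((block A i)^T *m block A i))
            + lam%:M).

Definition Hmat m b d (A : 'M[R]_(m * b, d)) (lam : R) : 'M[R]_d :=
  ((m * b)%:R^-1 *: (A^T *m A)) + lam%:M.

Definition dotv q (u v : 'cV[R]_q) : R := (u^T *m v) ord0 ord0.

Fixpoint pcg_state q (H M : 'M[R]_q) (g : 'cV[R]_q) (s : nat)
  : 'cV[R]_q * 'cV[R]_q * 'cV[R]_q :=
  match s with
  | O => (0, g, M *m g)
  | S s' =>
    let '(x, r, p) := pcg_state H M g s' in
    let z := M *m r in
    let a := dotv r z / dotv p (H *m p) in
    let x' := x + a *: p in
    let r' := r - a *: (H *m p) in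
    let z' := M *m r' in
    let bt := dotv r' z' / dotv r z in
    (x', r', z' + bt *: p)
  end.

Definition pcg q (H M : 'M[R]_q) (g : 'cV[R]_q) (s : nat) : 'cV[R]_q :=
  (pcg_state H M g s).1.1.

End Defs.

(* Mutual independence and identical distribution of the rows of a random matrix,
   tested on rectangles (products of Borel sets), which form a pi-system generating
   the Borel sigma-algebra of R^d. *)
Definition rows_iid (dT : measure_display) (T : measurableType dT) (R : realType)
  (P : probability T R) n d (A : T -> 'M[R]_(n, d)) : Prop :=
  (forall (B : 'I_n -> 'I_d -> set R), (forall r j, measurable (B r j)) ->
     P [set w : T | forall r j, B r j (A w r j)] =
     (\prod_(r < n) P [set w : T | forall j, B r j (A w r j)])%E)
  /\ (forall (B : 'I_d -> set R) (r r' : 'I_n), (forall j, measurable (B j)) ->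
     P [set w : T | forall j, B j (A w r j)] = P [set w : T | forall j, B j (A w r' j)]).

(* Main.v *)
Require Import Defs.
From HB Require Import structures.
From mathcomp Require Import all_boot all_order all_algebra.
From mathcomp Require Import all_classical all_reals all_analysis.
From mathcomp Require Import complex ring lra.
Import Order.TTheory GRing.Theory Num.Theory.
Local Open Scope ring_scope.
Local Open Scope classical_set_scope.
Set Implicit Arguments. Unset Strict Implicit. Unset Printing Implicit Defensive.

Section Base.
Variable R : realType.
Variable q : nat.
Implicit Types u v w : 'cV[R]_q.

Lemma dotvE u v : dotv u v = \sum_i u i 0 * v i 0.
Proof. by rewrite /dotv mxE; apply: eq_bigr => i _; rewrite mxE. Qed.

Lemma dotvC u v : dotv u v = dotv v u.
Proof. by rewrite !dotvE; apply: eq_bigr => i _; rewrite mulrC. Qed.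

Lemma dotvDl u v w : dotv (u + v) w = dotv u w + dotv v w.
Proof. by rewrite !dotvE -big_split; apply: eq_bigr => i _; rewrite mxE mulrDl. Qed.

Lemma dotvDr u v w : dotv w (u + v) = dotv w u + dotv w v.
Proof. by rewrite dotvC dotvDl !(dotvC w). Qed.

Lemma dotvZl a u v : dotv (a *: u) v = a * dotv u v.
Proof. by rewrite !dotvE mulr_sumr; apply: eq_bigr => i _; rewrite mxE mulrA. Qed.

Lemma dotvZr a u v : dotv u (a *: v) = a * dotv u v.
Proof. by rewrite dotvC dotvZl dotvC. Qed.

Lemma dotvNl u v : dotv (- u) v = - dotv u v.
Proof. by rewrite -scaleN1r dotvZl mulN1r. Qed.

Lemma dotvNr u v : dotv u (- v) = - dotv u v.
Proof. by rewrite dotvC dotvNl dotvC. Qed.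

Lemma dotvBl u v w : dotv (u - v) w = dotv u w - dotv v w.
Proof. by rewrite dotvDl dotvNl. Qed.

Lemma dotvBr u v w : dotv w (u - v) = dotv w u - dotv w v.
Proof. by rewrite dotvDr dotvNr. Qed.

Lemma dotv0l v : dotv 0 v = 0.
Proof. by rewrite dotvE big1 // => i _; rewrite mxE mul0r. Qed.

Lemma dotv0r v : dotv v 0 = 0.
Proof. by rewrite dotvC dotv0l. Qed.

Lemma dotv_mull (A : 'M[R]_q) u v : dotv (A *m u) v = dotv u (A^T *m v).
Proof. by rewrite /dotv trmx_mul mulmxA. Qed.

Lemma dotv_sym (A : 'M[R]_q) u v : A^T = A -> dotv u (A *m v) = dotv v (A *m u).
Proof. by move=> sA; rewrite dotvC dotv_mull sA. Qed.

Lemma dotv_sumr n (f : 'I_n -> 'cV[R]_q) u :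
  dotv u (\sum_(i < n) f i) = \sum_(i < n) dotv u (f i).
Proof.
elim: n f => [|n IH] f; first by rewrite !big_ord0 dotv0r.
by rewrite !big_ord_recr /= dotvDr IH.
Qed.

Lemma dotvvge0 v : 0 <= dotv v v.
Proof. by rewrite dotvE; apply: sumr_ge0 => i _; rewrite -expr2 sqr_ge0. Qed.

Lemma dotvv_eq0 v : dotv v v = 0 -> v = 0.
Proof.
rewrite dotvE => /eqP; rewrite psumr_eq0 => [/allP H|i _]; last by rewrite -expr2 sqr_ge0.
apply/matrixP => i j; rewrite ord1 mxE; apply/eqP.
by have := H i (mem_index_enum _); rewrite -expr2 sqrf_eq0.
Qed.

Lemma vnormE v : vnorm v = Num.sqrt (dotv v v).
Proof. by rewrite /vnorm dotvE; congr Num.sqrt; apply: eq_bigr => i _; rewrite expr2. Qed.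

Lemma vnorm_ge0 v : 0 <= vnorm v.
Proof. by rewrite vnormE sqrtr_ge0. Qed.

Lemma vnorm_sq v : vnorm v ^+ 2 = dotv v v.
Proof. by rewrite vnormE sqr_sqrtr // dotvvge0. Qed.

Lemma discr_le (a b c : R) : 0 <= a -> (forall t, 0 <= c + 2 * t * b + t ^+ 2 * a) ->
  b ^+ 2 <= c * a.
Proof.
move=> a0 H.
have [a_eq0|a_gt0] := eqVneq a 0.
  have [b_eq0|b_neq0] := eqVneq b 0; first by rewrite b_eq0 a_eq0 expr0n /= mulr0.
  have := H (- (c + 1) / (2 * b)); rewrite a_eq0 mulr0 addr0.
  rewrite (_ : 2 * (- (c + 1) / (2 * b)) * b = - (c + 1)); last by field.
  by rewrite opprD addrA subrr sub0r oppr_ge0 ler10.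
have apos : 0 < a by rewrite lt_def a_gt0 a0.
have := H (- b / a).
rewrite (_ : c + 2 * (- b / a) * b + (- b / a) ^+ 2 * a = c - b ^+ 2 / a); last by field.
by rewrite subr_ge0 ler_pdivrMr.
Qed.

Lemma CS (Q : 'M[R]_q) u v : Q^T = Q -> (forall x, 0 <= dotv x (Q *m x)) ->
  dotv u (Q *m v) ^+ 2 <= dotv u (Q *m u) * dotv v (Q *m v).
Proof.
move=> sQ pQ; apply: discr_le => // t.
have := pQ (u + t *: v).
rewrite mulmxDr -scalemxAr !dotvDl !dotvDr !dotvZl !dotvZr.
rewrite (dotv_sym v u sQ).
by congr (0 <= _); ring.
Qed.

Lemma CS1 u v : `|dotv u v| <= vnorm u * vnorm v.
Proof.
have H : dotv u v ^+ 2 <= dotv u u * dotv v v.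
  have := @CS 1%:M u v (trmx1 _ _); rewrite !mul1mx; apply => x.
  by rewrite mul1mx dotvvge0.
rewrite -(ger0_norm (vnorm_ge0 u)) -(ger0_norm (vnorm_ge0 v)) -normrM.
rewrite -ler_sqr ?nnegrE ?normr_ge0 //.
by rewrite !real_normK ?num_real // exprMn !vnorm_sq.
Qed.

Lemma vnormD u v : vnorm (u + v) <= vnorm u + vnorm v.
Proof.
rewrite -ler_sqr ?nnegrE ?addr_ge0 ?vnorm_ge0 //.
rewrite vnorm_sq dotvDl !dotvDr (dotvC v u) sqrrD !vnorm_sq.
have := CS1 u v => /(le_trans (ler_norm _)) H.
lra.
Qed.

Lemma vnormZ a v : vnorm (a *: v) = `|a| * vnorm v.
Proof.
rewrite !vnormE dotvZl dotvZr mulrA -expr2 sqrtrM ?sqr_ge0 //.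
by rewrite sqrtr_sqr.
Qed.

Lemma vnormN v : vnorm (- v) = vnorm v.
Proof. by rewrite -scaleN1r vnormZ normrN normr1 mul1r. Qed.

Lemma vnormB u v : vnorm (u - v) <= vnorm u + vnorm v.
Proof. by rewrite -(vnormN v) vnormD. Qed.

End Base.


Section SN.
Variable R : realType.

Lemma vnorm0 q : vnorm (0 : 'cV[R]_q) = 0.
Proof. by rewrite vnormE dotv0l sqrtr0. Qed.

Lemma vnorm_gt0 q (v : 'cV[R]_q) : v != 0 -> 0 < vnorm v.
Proof.
move=> vn0; rewrite vnormE sqrtr_gt0 lt_def dotvvge0 andbT.
by apply/eqP => /dotvv_eq0 /eqP; rewrite (negbTE vn0).
Qed.

Lemma specnorm_bound p q (M : 'M[R]_(p, q)) v :
  vnorm (M *m v) <= specnorm M * vnorm v.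
Proof.
have [->|vn0] := eqVneq v 0; first by rewrite mulmx0 !vnorm0 mulr0.
set E := [set r | exists v : 'cV[R]_q, vnorm v = 1 /\ r = vnorm (M *m v)].
pose K := \sum_(i < p) dotv (row i M)^T (row i M)^T.
have ub : has_ubound E.
  exists (Num.sqrt K) => _ [u [u1 ->]].
  rewrite vnormE; apply: ler_wsqrtr.
  rewrite dotvE; apply: ler_sum => i _.
  have -> : (M *m u) i 0 = dotv (row i M)^T u.
    by rewrite dotvE mxE; apply: eq_bigr => j _; rewrite !mxE.
  have := CS1 (row i M)^T u; rewrite u1 mulr1 => H.
  rewrite -expr2 -(vnorm_sq (row i M)^T) -real_normK ?num_real //.
  by rewrite lerXn2r ?nnegrE ?normr_ge0 ?vnorm_ge0.
have vp := vnorm_gt0 vn0.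
pose u := (vnorm v)^-1 *: v.
have Eu : E (vnorm (M *m u)).
  exists u; split => //.
  rewrite /u vnormZ ger0_norm; last by rewrite invr_ge0 ltW.
  by rewrite mulVf // gt_eqF.
have := sup_upper_bound (conj (ex_intro _ _ Eu) ub) Eu.
rewrite /u -scalemxAr vnormZ ger0_norm; last by rewrite invr_ge0 ltW.
by rewrite ler_pdivrMl // mulrC.
Qed.

Lemma specnorm_ge0 p q (M : 'M[R]_(p, q)) (v : 'cV[R]_q) : v != 0 -> 0 <= specnorm M.
Proof.
move=> vn0; have := specnorm_bound M v.
have vp := vnorm_gt0 vn0.
by move/(le_trans (vnorm_ge0 _)); rewrite pmulr_lge0.
Qed.
End SN.


Section PCG.
Variable R : realType.
Variable q : nat.
Variables (H M : 'M[R]_q) (g : 'cV[R]_q).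
Hypothesis Hsym : H^T = H.
Hypothesis Msym : M^T = M.
Hypothesis Hpd : forall v, v != 0 -> 0 < dotv v (H *m v).
Hypothesis Mpd : forall v, v != 0 -> 0 < dotv v (M *m v).

Definition xs k := (pcg_state H M g k).1.1.
Definition rs k := (pcg_state H M g k).1.2.
Definition ps k := (pcg_state H M g k).2.
Definition zs k := M *m rs k.
Definition als k := dotv (rs k) (zs k) / dotv (ps k) (H *m ps k).
Definition bes k := dotv (rs k.+1) (zs k.+1) / dotv (rs k) (zs k).

Lemma xs0 : xs 0 = 0. Proof. by []. Qed.
Lemma rs0 : rs 0 = g. Proof. by []. Qed.
Lemma ps0 : ps 0 = M *m g. Proof. by []. Qed.

Lemma stateS k : pcg_state H M g k.+1 =
  (xs k + als k *: ps k, rs k - als k *: (H *m ps k), zs k.+1 + bes k *: ps k).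
Proof.
rewrite /als /bes /zs /xs /rs /ps /=.
by case: (pcg_state H M g k) => [[x r] p].
Qed.

Lemma xsS k : xs k.+1 = xs k + als k *: ps k.
Proof. by rewrite {1}/xs stateS. Qed.
Lemma rsS k : rs k.+1 = rs k - als k *: (H *m ps k).
Proof. by rewrite {1}/rs stateS. Qed.
Lemma psS k : ps k.+1 = zs k.+1 + bes k *: ps k.
Proof. by rewrite {1}/ps stateS. Qed.

Lemma rs_res k : rs k = g - H *m xs k.
Proof.
elim: k => [|k IH]; first by rewrite rs0 xs0 mulmx0 subr0.
by rewrite rsS xsS IH mulmxDr -scalemxAr opprD addrA.
Qed.

Lemma Hpd0 v : dotv v (H *m v) = 0 -> v = 0.
Proof. by have [//|/Hpd] := eqVneq v 0; move=> /gt_eqF /eqP. Qed.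
Lemma Mpd0 v : dotv v (M *m v) = 0 -> v = 0.
Proof. by have [//|/Mpd] := eqVneq v 0; move=> /gt_eqF /eqP. Qed.

Lemma rs0_ps0 k : rs k = 0 -> ps k = 0.
Proof.
case: k => [|k]; first by rewrite rs0 ps0 => ->; rewrite mulmx0.
move=> r0; rewrite psS /bes /zs r0 mulmx0 dotv0l mul0r scale0r addr0 //.
Qed.

Lemma als0 k : als k = 0 -> ps k = 0.
Proof.
rewrite /als => /eqP; rewrite mulf_eq0 invr_eq0 => /orP[] /eqP.
  by move/Mpd0/rs0_ps0.
by move/Hpd0.
Qed.

Definition PP k v := exists c : nat -> R, v = \sum_(i < k) c i *: ps i.

Lemma PP0 k : PP k 0.
Proof. by exists (fun _ => 0); rewrite big1 // => i _; rewrite scale0r. Qed.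

Lemma PPD k u v : PP k u -> PP k v -> PP k (u + v).
Proof.
move=> [c ->] [c' ->]; exists (fun i => c i + c' i).
by rewrite -big_split; apply: eq_bigr => i _; rewrite scalerDl.
Qed.

Lemma PPZ k a v : PP k v -> PP k (a *: v).
Proof.
move=> [c ->]; exists (fun i => a * c i).
by rewrite scaler_sumr; apply: eq_bigr => i _; rewrite scalerA.
Qed.

Lemma PPN k v : PP k v -> PP k (- v).
Proof. by move=> /(PPZ (-1)); rewrite scaleN1r. Qed.

Lemma PPB k u v : PP k u -> PP k v -> PP k (u - v).
Proof. by move=> Pu /PPN; apply: PPD. Qed.

Lemma PPS k v : PP k v -> PP k.+1 v.
Proof.
move=> [c ->]; exists (fun i => if (i < k)%N then c i else 0).
rewrite big_ord_recr /= ltnn scale0r addr0.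
by apply: eq_bigr => i _; rewrite ltn_ord.
Qed.

Lemma PP_mono k k' v : (k <= k')%N -> PP k v -> PP k' v.
Proof.
elim: k' => [|k' IH]; first by rewrite leqn0 => /eqP ->.
rewrite leq_eqVlt => /orP[/eqP -> //|]; rewrite ltnS => /IH H1 /H1.
exact: PPS.
Qed.

Lemma PPps k i : (i < k)%N -> PP k (ps i).
Proof.
move=> ik; exists (fun j => if j == i then 1 else 0).
rewrite (bigD1 (Ordinal ik)) //= eqxx scale1r big1 ?addr0 // => j.
by rewrite -val_eqE /= => /negbTE ->; rewrite scale0r.
Qed.

Lemma PP_sum k n (f : 'I_n -> 'cV[R]_q) : (forall i, PP k (f i)) ->
  PP k (\sum_(i < n) f i).
Proof.
elim: n f => [|n IH] f Hf; first by rewrite big_ord0; apply: PP0.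
by rewrite big_ord_recr /=; apply: PPD => //; apply: IH.
Qed.

Lemma PP_orth k r v : (forall j, (j < k)%N -> dotv r (ps j) = 0) -> PP k v ->
  dotv r v = 0.
Proof.
move=> Hr [c ->]; rewrite dotv_sumr big1 // => i _.
by rewrite dotvZr Hr ?mulr0.
Qed.

Lemma zs_in k : PP k.+1 (zs k).
Proof.
case: k => [|k]; first by rewrite /zs rs0 -ps0; apply: PPps.
have -> : zs k.+1 = ps k.+1 - bes k *: ps k by rewrite psS addrK.
by apply: PPB; [apply: PPps|apply: PPZ; apply: PPps; rewrite ltnS ltnW].
Qed.

Lemma MHps_in i : PP i.+2 (M *m (H *m ps i)).
Proof.
have [a0|an0] := eqVneq (als i) 0.
  by rewrite (als0 a0) !mulmx0; apply: PP0.
have -> : M *m (H *m ps i) = (als i)^-1 *: (zs i - zs i.+1).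
  rewrite /zs rsS mulmxBr opprB addrC subrK -scalemxAr scalerA mulVf //.
  by rewrite scale1r.
apply: PPZ; apply: PPB; last exact: zs_in.
by apply: PP_mono (zs_in i); rewrite ltnW.
Qed.

Lemma MH_PP k v : PP k v -> PP k.+1 (M *m (H *m v)).
Proof.
move=> [c ->]; rewrite mulmx_sumr mulmx_sumr; apply: PP_sum => i.
rewrite -!scalemxAr; apply: PPZ; apply: PP_mono (MHps_in i).
by rewrite !ltnS.
Qed.

Definition Inv k := [/\ forall j, (j < k)%N -> dotv (rs k) (ps j) = 0,
  forall j, (j < k)%N -> dotv (ps k) (H *m ps j) = 0 &
  dotv (rs k) (ps k) = dotv (rs k) (zs k)].

Lemma Inv_r k : Inv k -> forall j, (j < k.+1)%N -> dotv (rs k.+1) (ps j) = 0.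
Proof.
case=> I1 I2 I3 j; rewrite ltnS leq_eqVlt => /orP[/eqP ->|jk].
  rewrite rsS dotvBl dotvZl dotv_mull Hsym.
  have [p0|pn0] := eqVneq (ps k) 0.
    by rewrite p0 mulmx0 !dotv0r mulr0 subr0.
  rewrite I3 /als mulfVK ?subrr //.
  by rewrite gt_eqF // Hpd.
rewrite rsS dotvBl dotvZl dotv_mull Hsym I1 //.
by rewrite I2 // mulr0 subr0.
Qed.

Lemma Inv_step k : Inv k -> Inv k.+1.
Proof.
move=> Ik; have Ir := Inv_r Ik; case: Ik => I1 I2 I3.
split => //.
- move=> j; rewrite ltnS leq_eqVlt => /orP[/eqP ->|jk].
    rewrite psS dotvDl dotvZl /zs dotv_mull Msym.
    have [a0|an0] := eqVneq (als k) 0.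
      by rewrite (als0 a0) !mulmx0 !dotv0r mulr0 addr0.
    have E : M *m (H *m ps k) = (als k)^-1 *: (zs k - zs k.+1).
      rewrite /zs rsS mulmxBr opprB addrC subrK -scalemxAr scalerA mulVf //.
      by rewrite scale1r.
    rewrite E dotvZr dotvBr (PP_orth Ir (zs_in k)) sub0r.
    rewrite /zs /bes /als.
    move: an0; rewrite /als mulf_eq0 negb_or invr_eq0 => /andP[rz0 pp0].
    rewrite invfM invrK; field.
    by rewrite rz0.
  rewrite psS dotvDl dotvZl /zs dotv_mull Msym.
  rewrite (PP_orth Ir (PP_mono _ (MHps_in j))) // ?I2 ?mulr0 ?addr0 //.
- by rewrite psS dotvDr dotvZr Ir // mulr0 addr0.
Qed.

Lemma Inv_all k : Inv k.
Proof.
elim: k => [|k IH]; last exact: Inv_step.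
by split => //; rewrite ps0 /zs rs0.
Qed.

Lemma xs_in k : PP k (xs k).
Proof.
elim: k => [|k IH]; first by rewrite xs0; apply: PP0.
rewrite xsS; apply: PPD; first exact: PPS.
by apply: PPZ; apply: PPps.
Qed.

Lemma pyth_le e w : dotv w (H *m e) = 0 ->
  dotv e (H *m e) <= dotv (e + w) (H *m (e + w)).
Proof.
move=> O.
rewrite mulmxDr !dotvDl !dotvDr (dotv_sym e w Hsym) O add0r addr0.
rewrite lerDl.
have [->|wn0] := eqVneq w 0; first by rewrite mulmx0 dotv0r.
exact/ltW/Hpd.
Qed.

Lemma pcg_opt s xstar y : H *m xstar = g -> PP s y ->
  dotv (xs s - xstar) (H *m (xs s - xstar)) <= dotv (y - xstar) (H *m (y - xstar)).
Proof.
move=> Hx Py.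
have -> : y - xstar = (xs s - xstar) + (y - xs s) by rewrite [RHS]addrC addrA subrK.
have Pw : PP s (y - xs s) by apply: PPB => //; apply: xs_in.
have He : H *m (xs s - xstar) = - rs s by rewrite rs_res mulmxBr Hx opprB.
have [I1 _ _] := Inv_all s.
apply: pyth_le.
by rewrite He dotvNr dotvC (PP_orth I1 Pw) oppr0.
Qed.

Fixpoint ys k := if k is k'.+1 then ys k' + M *m (g - H *m ys k') else 0.

Lemma ys_in k : PP k (ys k).
Proof.
elim: k => [|k IH] /=; first exact: PP0.
rewrite mulmxBr; apply: PPD; first exact: PPS.
apply: PPB; first by rewrite -ps0; apply: PPps.
exact: MH_PP.
Qed.

Lemma ys_err k xstar (al : R) : H *m xstar = g ->
  (forall e, dotv (e - M *m (H *m e)) (H *m (e - M *m (H *m e))) <= al ^+ 2 * dotv e (H *m e)) ->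
  dotv (ys k - xstar) (H *m (ys k - xstar)) <= (al ^+ 2) ^+ k * dotv xstar (H *m xstar).
Proof.
move=> Hx Hc; elim: k => [|k IH].
  by rewrite /= sub0r mulmxN dotvNl dotvNr opprK expr0 mul1r.
have -> : ys k.+1 - xstar = (ys k - xstar) - M *m (H *m (ys k - xstar)).
  rewrite /= -Hx !mulmxBr opprB addrAC //.
apply: le_trans (Hc _) _.
by rewrite [(_ ^+ 2) ^+ k.+1]exprS -mulrA ler_wpM2l // sqr_ge0.
Qed.

Lemma pcg_bound s xstar (al : R) : H *m xstar = g ->
  (forall e, dotv (e - M *m (H *m e)) (H *m (e - M *m (H *m e))) <= al ^+ 2 * dotv e (H *m e)) ->
  dotv (xs s - xstar) (H *m (xs s - xstar)) <= (al ^+ 2) ^+ s * dotv xstar (H *m xstar).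
Proof. by move=> Hx Hc; apply: le_trans (pcg_opt Hx (ys_in s)) (ys_err s Hx Hc). Qed.

End PCG.


Lemma polar_real (R : realType) (N X al : R) : 0 <= N -> 0 <= X -> 0 <= al ->
  (forall u, 4 * u * N <= 2 * al * (u ^+ 2 * X + N)) -> N <= al ^+ 2 * X.
Proof.
move=> N0 X0 al0 H.
have [->|Np] := eqVneq N 0; first by rewrite mulr_ge0 ?sqr_ge0.
have Npos : 0 < N by rewrite lt_def Np N0.
have [Xz|Xn] := eqVneq X 0.
  have := H (al + 1); rewrite Xz mulr0 add0r => H1.
  exfalso; move: H1; apply/negP; rewrite -ltNge; nra.
have Xpos : 0 < X by rewrite lt_def Xn X0.
have [alz|aln] := eqVneq al 0.
  have := H 1; rewrite alz mulr0 mul0r mulr1 => H1.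
  exfalso; move: H1; apply/negP; rewrite -ltNge; nra.
have alpos : 0 < al by rewrite lt_def aln al0.
have := H (N / (al * X)).
set u := N / (al * X).
have uE : u * (al * X) = N by rewrite /u mulfVK // mulf_neq0.
have up : 0 < u by rewrite /u divr_gt0 // mulr_gt0.
move=> H1.
(* 4uN <= 2 al u^2 X + 2 al N ; al u X = N  => 4uN <= 2 u N + 2 al N => 2 u N <= 2 al N => u <= al *)
have H2 : u <= al by nra.
have : N <= al * (al * X) by rewrite -uE ler_wpM2r // mulr_ge0 // ltW.
by rewrite mulrA -expr2.
Qed.

Lemma polar1 (R : realType) q (Q : 'M[R]_q) x z u : Q^T = Q ->
  4 * u * dotv x (Q *m z) =
  dotv (u *: x + z) (Q *m (u *: x + z)) - dotv (u *: x - z) (Q *m (u *: x - z)).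
Proof.
move=> sQ.
rewrite !mulmxDr !mulmxN -!scalemxAr !dotvDl !dotvDr !dotvNl !dotvNr !dotvZl !dotvZr.
rewrite (dotv_sym z x sQ); ring.
Qed.

Lemma polar2 (R : realType) q (Q : 'M[R]_q) x z u : Q^T = Q ->
  dotv (u *: x + z) (Q *m (u *: x + z)) + dotv (u *: x - z) (Q *m (u *: x - z)) =
  2 * (u ^+ 2 * dotv x (Q *m x) + dotv z (Q *m z)).
Proof.
move=> sQ.
rewrite !mulmxDr !mulmxN -!scalemxAr !dotvDl !dotvDr !dotvNl !dotvNr !dotvZl !dotvZr.
rewrite (dotv_sym z x sQ); ring.
Qed.

Section Rich.
Variable R : realType.
Variable q : nat.
Variables (H M : 'M[R]_q) (g : 'cV[R]_q).
Hypothesis Hsym : H^T = H.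
Hypothesis Msym : M^T = M.
Hypothesis Hpsd : forall v, 0 <= dotv v (H *m v).

Lemma rich_contr (al : R) : 0 <= al ->
  (forall x, `|dotv x (H *m x) - dotv (H *m x) (M *m (H *m x))| <= al * dotv x (H *m x)) ->
  forall e, dotv (e - M *m (H *m e)) (H *m (e - M *m (H *m e))) <= al ^+ 2 * dotv e (H *m e).
Proof.
move=> al0 Hb e.
pose K := H - H *m M *m H.
have Ksym : K^T = K by rewrite /K linearB /= !trmx_mul Hsym Msym mulmxA.
pose B x z := dotv x (K *m z).
have BE x : B x x = dotv x (H *m x) - dotv (H *m x) (M *m (H *m x)).
  by rewrite /B /K mulmxBl dotvBr -!mulmxA dotv_mull Hsym.
have Bb x : B x x <= al * dotv x (H *m x) by rewrite BE; exact: le_trans (ler_norm _) (Hb x).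
have Bb' x : - B x x <= al * dotv x (H *m x).
  by rewrite BE; apply: le_trans (Hb x); rewrite -normrN; exact: ler_norm.
pose Te := e - M *m (H *m e).
change (dotv Te (H *m Te) <= al ^+ 2 * dotv e (H *m e)).
have HT : H *m Te = K *m e by rewrite /Te /K mulmxBr mulmxBl !mulmxA.
have NE : dotv Te (H *m Te) = B e Te by rewrite HT /B (dotv_sym Te e Ksym).
apply: polar_real => //; last move=> u.
rewrite {1}NE /B polar1 // (mulrC 2 al) -mulrA -polar2 // mulrDr.
have := Bb (u *: e + Te); have := Bb' (u *: e - Te); rewrite /B.
lra.
Qed.

End Rich.

Section Spec.
Variable R : realType.
Local Notation C := (complex R).
Local Open Scope complex_scope.
Local Open Scope sesquilinear_scope.

Definition hf n (a b : 'cV[C]_n) : C := (a ^t* *m b) 0 0.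

Lemma hf_adj n (A : 'M[C]_n) a b : hf a (A *m b) = hf (A ^t* *m a) b.
Proof.
have E : (A ^t* *m a) ^t* = a ^t* *m A.
  rewrite trmx_mul map_mxM; congr (_ *m _); apply/matrixP => i j; rewrite !mxE; exact: conjCK.
by rewrite /hf E mulmxA.
Qed.

Lemma hf_adj' n (A : 'M[C]_n) a b : hf a (A ^t* *m b) = hf (A *m a) b.
Proof.
rewrite hf_adj; congr hf; congr (_ *m _).
by apply/matrixP => i j; rewrite !mxE; exact: conjCK.
Qed.

Lemma hfE n (a b : 'cV[C]_n) : hf a b = \sum_i Num.conj (a i 0) * b i 0.
Proof. by rewrite /hf mxE; apply: eq_bigr => i _; rewrite !mxE. Qed.

Lemma real_conj (x : R) : Num.conj (x%:C) = x%:C.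
Proof. apply/CrealP; apply/complex_realP; by exists x. Qed.

Lemma hf_real n (u u' : 'cV[R]_n) :
  hf (map_mx (real_complex R) u) (map_mx (real_complex R) u') = (dotv u u')%:C.
Proof.
rewrite hfE /dotv mxE rmorph_sum; apply: eq_bigr => i _.
by rewrite !mxE real_conj rmorphM.
Qed.

End Spec.

Section Spec2.
Variable R : realType.
Local Notation C := (complex R).
Local Open Scope complex_scope.
Local Open Scope sesquilinear_scope.

Lemma spectral_real n (S : 'M[R]_n) smax :
  S^T = S -> (forall a, eigenvalue S a -> 0 < a) ->
  (forall a, eigenvalue S a -> a <= smax) ->
  forall v : 'cV[R]_n, 0 <= dotv v (S *m v) /\
     dotv (S *m v) (S *m v) <= smax ^+ 2 * dotv v v.
Proof.
move=> Ssym Spos Smax v.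
pose f := real_complex R.
pose Sc := map_mx f S.
have Scsym : Sc \is symmetricmx.
  apply/is_hermitianmxP; rewrite expr0 scale1r.
  apply/matrixP => i j; rewrite !mxE.
  by rewrite -[in LHS]Ssym mxE.
have Screal : Sc \is a realmx.
  by apply/mxOverP => i j; rewrite mxE; apply/complex_realP; exists (S i j).
have Scherm : Sc \is hermsymmx by apply: realsym_hermsym.
have Scnorm : Sc \is normalmx by apply: hermitian_normalmx.
pose P := spectralmx Sc.
pose D := spectral_diag Sc.
have HSc : Sc = invmx P *m diag_mx D *m P by apply/orthomx_spectralP.
have Punit : P \is unitarymx := spectral_unitarymx Sc.
have PU : P \in unitmx := spectral_unit Sc.
have Pinv : invmx P = P ^t* := invmx_unitary Punit.
have Dreal : D \is a realmx := hermitian_spectral_diag_real Scherm.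
have PSc : P *m Sc = diag_mx D *m P.
  by rewrite HSc !mulmxA mulmxV // mul1mx.
have eigD : forall i, exists2 mu : R, D 0 i = mu%:C & 0 < mu <= smax.
  move=> i.
  have /complex_realP [mu Hmu] : D 0 i \is Num.real by apply: (mxOverP Dreal).
  exists mu => //.
  have Eig : eigenvalue S mu.
    rewrite eigenvalue_root_char -(fmorph_root f) map_char_poly.
    rewrite -eigenvalue_root_char.
    suff HH : eigenvalue Sc (D 0 i) by move: HH; rewrite Hmu.
    apply/eigenvalueP; exists (row i P).
      rewrite -row_mul PSc mul_diag_mx.
      by apply/rowP => j; rewrite !mxE.
    apply/eqP => Hr.
    have : row i (P *m P ^t*) = 0 by rewrite row_mul Hr mul0mx.
    rewrite (unitarymxP Punit) => /rowP /(_ i); rewrite !mxE eqxx /=.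
    by move/eqP; rewrite oner_eq0.
  by rewrite Spos // Smax.
pose vc := map_mx f v.
pose w := P *m vc.
have PtP : P ^t* *m P = 1%:M by rewrite -Pinv mulVmx.
have PPt : P *m P ^t* = 1%:M by apply/unitarymxP.
have ScE : Sc = P ^t* *m (diag_mx D *m P) by rewrite HSc Pinv mulmxA.
have hvv : (dotv v v)%:C = hf w w.
  by rewrite -hf_real -/vc -[X in hf _ X]mul1mx -PtP -mulmxA hf_adj'.
have Dw : forall i, (diag_mx D *m w) i 0 = D 0 i * w i 0.
  by move=> i; rewrite mul_diag_mx mxE.
split.
  rewrite -ler0c -hf_real map_mxM -/Sc -/vc ScE -mulmxA hf_adj' -mulmxA -/w.
  rewrite hfE; apply: sumr_ge0 => i _; rewrite Dw.
  have [mu -> /andP[mu0 _]] := eigD i.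
  rewrite mulrCA; apply: mulr_ge0; first by rewrite ler0c ltW.
  by rewrite mulrC mul_conjC_ge0.
rewrite -lecR rmorphM /= hvv -hf_real map_mxM -/Sc -/vc ScE.
rewrite -mulmxA -/w hf_adj' mulmxA PPt mul1mx.
rewrite -!mulmxA -/w !hfE mulr_sumr; apply: ler_sum => i _; rewrite Dw.
have [mu -> /andP[mu0 musm]] := eigD i.
rewrite rmorphM /= real_conj.
rewrite (_ : mu%:C * Num.conj (w i 0) * (mu%:C * w i 0) =
             (mu ^+ 2)%:C * (Num.conj (w i 0) * w i 0)); last first.
  by rewrite rmorphXn /=; ring.
rewrite rmorphXn /=.
apply: ler_wpM2r; first by rewrite mulrC mul_conjC_ge0.
rewrite -!rmorphXn /= lecR.
by rewrite lerXn2r // ?nnegrE ltW // (lt_le_trans mu0).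
Qed.
End Spec2.

Section Core.
Variable R : realType.

Lemma dotv_mull_rect p q (A : 'M[R]_(p, q)) u v : dotv (A *m u) v = dotv u (A^T *m v).
Proof. by rewrite /dotv trmx_mul mulmxA. Qed.

Lemma lower_norm q (Q : 'M[R]_q) lam v : 0 < lam ->
  (forall v, lam * dotv v v <= dotv v (Q *m v)) -> lam * vnorm v <= vnorm (Q *m v).
Proof.
move=> l0 Hc.
have [->|vn0] := eqVneq v 0; first by rewrite mulmx0 vnorm0 mulr0.
have vp := vnorm_gt0 vn0.
have : lam * vnorm v * vnorm v <= vnorm (Q *m v) * vnorm v.
  rewrite -mulrA -expr2 vnorm_sq.
  apply: le_trans (Hc v) _; rewrite dotvC.
  exact: le_trans (ler_norm _) (CS1 _ _).
by rewrite (ler_pM2r vp).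
Qed.

Lemma unit_coercive q (Q : 'M[R]_q) lam : Q^T = Q -> 0 < lam ->
  (forall v, lam * dotv v v <= dotv v (Q *m v)) -> Q \in unitmx.
Proof.
move=> Qs l0 Hc; rewrite -row_free_unit; apply: inj_row_free => v Hv.
have H0 : Q *m v^T = 0 by rewrite -{1}Qs -trmx_mul Hv trmx0.
have := lower_norm (v^T) l0 Hc; rewrite H0 vnorm0.
move=> H1; have : vnorm v^T = 0.
  apply/eqP; rewrite eq_le vnorm_ge0 andbT.
  by rewrite -(pmulr_rle0 _ l0).
move=> /(congr1 (fun x => x ^+ 2)); rewrite vnorm_sq expr0n /= => /dotvv_eq0.
by move=> /(congr1 trmx); rewrite trmxK trmx0.
Qed.

Lemma pd_coercive q (Q : 'M[R]_q) lam : 0 < lam ->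
  (forall v, lam * dotv v v <= dotv v (Q *m v)) -> forall v, v != 0 -> 0 < dotv v (Q *m v).
Proof.
move=> l0 Hc v vn0; apply: lt_le_trans (Hc v); rewrite mulr_gt0 //.
by rewrite -vnorm_sq exprn_gt0 // vnorm_gt0.
Qed.

Lemma rho_bound (a : R) : 0 <= a -> a < 2^-1 ->
  let rho := (1 - Num.sqrt (1 - a / (1 - a))) / (1 + Num.sqrt (1 - a / (1 - a))) in
  0 <= rho /\ a ^+ 2 <= rho.
Proof.
move=> a0 a2.
have a1 : 0 < 1 - a by lra.
set be := a / (1 - a).
have be0 : 0 <= be by rewrite /be divr_ge0 // ltW.
have be1 : be <= 1 by rewrite /be ler_pdivrMr // mul1r; lra.
set r := Num.sqrt (1 - be).
have r0 : 0 <= r by rewrite sqrtr_ge0.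
have r2 : r ^+ 2 = 1 - be by rewrite sqr_sqrtr // subr_ge0.
have r1 : r <= 1 by nra.
have rp : 0 < 1 + r by lra.
move=> rho.
split; first by rewrite /rho divr_ge0 //; lra.
rewrite /rho ler_pdivlMr //.
have : a ^+ 2 * (1 + r) * (1 + r) <= (1 - r) * (1 + r).
  have -> : (1 - r) * (1 + r) = be.
    have h : (1 - r) * (1 + r) = 1 - r ^+ 2 by ring.
    by rewrite h r2; ring.
  have : 4 * a ^+ 2 <= be.
    rewrite /be ler_pdivlMr //.
    have := mulr_ge0 a0 (sqr_ge0 (1 - 2 * a)); nra.
  nra.
by rewrite ler_pM2r.
Qed.

Lemma HnormE q (H : 'M[R]_q) v : Hnorm2 H v = dotv v (H *m v).
Proof. by rewrite /Hnorm2 /dotv mulmxA. Qed.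

Lemma core d (Sigma G H M : 'M[R]_d) (g : 'cV[R]_d) s smax lam a0 a1 om :
  Sigma^T = Sigma -> (forall v, 0 <= dotv v (Sigma *m v)) ->
  (forall v, vnorm (Sigma *m v) <= smax * vnorm v) -> 0 <= smax -> 0 < lam ->
  H = Sigma + lam%:M - G -> H^T = H ->
  (forall v, vnorm (G *m v) <= a0 * vnorm v) -> 0 <= a0 ->
  (forall v, lam * dotv v v <= dotv v (H *m v)) ->
  M^T = M -> (forall v, v != 0 -> 0 < dotv v (M *m v)) ->
  (forall v, vnorm ((M - invmx (Sigma + lam%:M)) *m v) <= (a1 + om) * vnorm v) ->
  0 <= a1 -> 0 <= om ->
  let alpha := (smax + lam + a0) * (lam ^- 2 * a0 + a1 + om) in
  alpha < 2^-1 ->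
  let rho := (1 - Num.sqrt (1 - alpha / (1 - alpha))) /
             (1 + Num.sqrt (1 - alpha / (1 - alpha))) in
  Hnorm2 H (pcg H M g s - invmx H *m g) / Hnorm2 H (invmx H *m g) <= 4 * rho ^+ s.
Proof.
move=> Ss Spsd Sn sm0 l0 HE Hs Gn a00 Hc Ms Mpd Fn a10 om0 alpha Ha /=.
set rho := (1 - Num.sqrt _) / _.
set c := smax + lam + a0.
set k := lam ^- 2 * a0 + a1 + om.
have c0 : 0 <= c by rewrite /c; lra.
have k0 : 0 <= k.
  by rewrite /k !addr_ge0 // mulr_ge0 // invr_ge0 exprn_ge0 // ltW.
have al0 : 0 <= alpha by rewrite /alpha mulr_ge0.
pose S := Sigma + lam%:M.
have SvE v : S *m v = Sigma *m v + lam *: v by rewrite mulmxDl mul_scalar_mx.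
have Ss' : S^T = S by rewrite /S linearD /= Ss tr_scalar_mx.
have Sc v : lam * dotv v v <= dotv v (S *m v).
  by rewrite SvE dotvDr dotvZr; have := Spsd v; lra.
have Su : S \in unitmx := unit_coercive Ss' l0 Sc.
have Hu : H \in unitmx := unit_coercive Hs l0 Hc.
have Hpd := pd_coercive l0 Hc.
have Hpsd v : 0 <= dotv v (H *m v).
  by apply: le_trans (Hc v); apply: mulr_ge0; [exact: ltW|exact: dotvvge0].
have Hn v : vnorm (H *m v) <= c * vnorm v.
  rewrite HE mulmxBl mulmxDl mul_scalar_mx.
  apply: le_trans (vnormB _ _) _; apply: le_trans (lerD (vnormD _ _) (lexx _)) _.
  rewrite vnormZ ger0_norm; last exact: ltW.
  rewrite /c !mulrDl.
  by apply: lerD; [apply: lerD|]; rewrite ?lexx.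
have F6 x : dotv (H *m x) (H *m x) <= c * dotv x (H *m x).
  have cs := CS x (H *m x) Hs Hpsd.
  have e1 : dotv x (H *m (H *m x)) = dotv (H *m x) (H *m x) by rewrite dotv_mull Hs.
  have e2 : dotv (H *m x) (H *m (H *m x)) <= c * dotv (H *m x) (H *m x).
    apply: le_trans (ler_norm _) _; apply: le_trans (CS1 _ _) _.
    rewrite -vnorm_sq expr2 mulrCA ler_wpM2l ?vnorm_ge0 //.
  rewrite e1 in cs.
  set Y := dotv (H *m x) (H *m x) in cs e2 *.
  have Y0 : 0 <= Y by rewrite /Y dotvvge0.
  have X0 := Hpsd x.
  have [->|Yn] := eqVneq Y 0; first by rewrite mulr_ge0.
  have Yp : 0 < Y by rewrite lt_def Yn Y0.
  have : Y * Y <= (c * dotv x (H *m x)) * Y.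
    rewrite -expr2; apply: le_trans cs _.
    by rewrite (mulrC c) -mulrA ler_wpM2l.
  by rewrite (ler_pM2r Yp).
have F5 x : `|dotv x (H *m x) - dotv (H *m x) (M *m (H *m x))| <= alpha * dotv x (H *m x).
  pose y := H *m x.
  pose wv := invmx S *m y.
  pose F := M - invmx S.
  have Swv : S *m wv = y by rewrite /wv mulmxA mulmxV // mul1mx.
  have Hxw : H *m (x - wv) = G *m wv.
    rewrite mulmxBr {2}HE mulmxBl -/S Swv -/y opprB addrC subrK //.
  have My : M *m y = wv + F *m y by rewrite /F mulmxBl addrC /wv subrK.
  have h1 : dotv x y - dotv y wv = dotv x (G *m wv).
    by rewrite -Hxw (dotv_sym _ _ Hs) dotvBl (dotvC y).
  have D : dotv x y - dotv y (M *m y) = dotv x (G *m wv) - dotv y (F *m y).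
    by rewrite My dotvDr -h1; ring.
  change (`|dotv x y - dotv y (M *m y)| <= alpha * dotv x y).
  rewrite D.
  have nx : lam * vnorm x <= vnorm y := lower_norm x l0 Hc.
  have nw : lam * vnorm wv <= vnorm y by rewrite -Swv; exact: lower_norm wv l0 Sc.
  have b1 : `|dotv x (G *m wv)| <= vnorm x * (a0 * vnorm wv).
    exact: le_trans (CS1 _ _) (ler_wpM2l (vnorm_ge0 _) (Gn wv)).
  have b2 : `|dotv y (F *m y)| <= vnorm y * ((a1 + om) * vnorm y).
    exact: le_trans (CS1 _ _) (ler_wpM2l (vnorm_ge0 _) (Fn y)).
  have Yc : vnorm y ^+ 2 <= c * dotv x y by rewrite vnorm_sq; exact: F6 x.
  have P : lam ^+ 2 * (vnorm x * vnorm wv) <= vnorm y ^+ 2.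
    rewrite !expr2 mulrACA; apply: ler_pM => //.
      by apply: mulr_ge0; [exact: ltW|exact: vnorm_ge0].
    by apply: mulr_ge0; [exact: ltW|exact: vnorm_ge0].
  have P2 : vnorm x * vnorm wv <= lam ^- 2 * vnorm y ^+ 2.
    by rewrite ler_pdivlMl // exprn_gt0.
  have P3 : a0 * (vnorm x * vnorm wv) <= a0 * (lam ^- 2 * vnorm y ^+ 2).
    exact: ler_wpM2l.
  have P4 : k * vnorm y ^+ 2 <= k * (c * dotv x y) by exact: ler_wpM2l.
  apply: le_trans (ler_normB _ _) _.
  have -> : alpha * dotv x y = k * (c * dotv x y) by rewrite /alpha -/c -/k; ring.
  apply: le_trans P4; rewrite /k.
  have e1 : vnorm x * (a0 * vnorm wv) = a0 * (vnorm x * vnorm wv) by ring.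
  have e2 : vnorm y * ((a1 + om) * vnorm y) = (a1 + om) * vnorm y ^+ 2 by ring.
  rewrite e1 e2 in b1 b2.
  have e3 : a0 * (lam ^- 2 * vnorm y ^+ 2) = lam ^- 2 * a0 * vnorm y ^+ 2 by ring.
  rewrite e3 in P3.
  rewrite mulrDl mulrDl.
  lra.
have Hc' := rich_contr Hs Ms Hpsd al0 F5.
have Hx : H *m (invmx H *m g) = g by rewrite mulmxA mulmxV // mul1mx.
have Bd := pcg_bound Hs Ms Hpd Mpd s Hx Hc'.
rewrite !HnormE.
change (pcg H M g s) with (xs H M g s).
have [r0 ar] : 0 <= rho /\ alpha ^+ 2 <= rho := rho_bound al0 Ha.
move: Bd.
set X := dotv (invmx H *m g) (H *m (invmx H *m g)).
set E := dotv _ _ => Bd.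
have X0 : 0 <= X := Hpsd _.
have rs0 : 0 <= rho ^+ s by rewrite exprn_ge0.
have [->|Xn] := eqVneq X 0; first by rewrite invr0 mulr0 mulr_ge0.
have Xp : 0 < X by rewrite lt_def Xn X0.
rewrite ler_pdivrMr //; apply: le_trans Bd _.
rewrite ler_wpM2r //.
have : (alpha ^+ 2) ^+ s <= rho ^+ s.
  by apply: lerXn2r => //; rewrite nnegrE // sqr_ge0.
move=> h; apply: le_trans h _.
by rewrite ler_peMl // ler1n.
Qed.

End Core.

Unset Implicit Arguments.

Theorem lemmaB1 (R : realType) (dT : measure_display) (T : measurableType dT)
  (P : probability T R) (m b d : nat) (A : T -> 'M[R]_(m * b, d))
  (Sigma : 'M[R]_d) (smax lam : R) (g : 'cV[R]_d) (s : nat) (w : T) :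
  (0 < m)%N -> (0 < b)%N ->
  (forall r j, measurable_fun setT (fun w' => A w' r j)) ->
  (forall r j, P.-integrable setT (fun w' => ((A w' r j) ^+ 2)%:E)) ->
  (forall r j, ('E_P[fun w' => A w' r j] = 0%:E)%E) ->
  (forall r j k, ('E_P[fun w' => (A w' r j * A w' r k)%R] = (Sigma j k)%:E)%E) ->
  rows_iid P A ->
  (forall a, eigenvalue Sigma a -> 0 < a) ->
  eigenvalue Sigma smax -> (forall a, eigenvalue Sigma a -> a <= smax) ->
  0 < lam ->
  m%:R * deff Sigma lam < (m * b)%:R ->
  let n : R := (m * b)%:R in
  let H := Hmat (A w) lam in
  let Htinv_w := Htinv (A w) Sigma lam in
  let EHtinv := \matrix_(i < d, j < d) fine ('E_P[fun w' => Htinv (A w') Sigma lam i j])%E in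
  let alpha0 := specnorm (Sigma - n^-1 *: ((A w)^T *m A w)) in
  let alpha1 := specnorm (Htinv_w - EHtinv) in
  let Omega0 := EHtinv - invmx (Sigma + lam%:M) in
  let alpha := (smax + lam + alpha0) * (lam ^- 2 * alpha0 + alpha1 + specnorm Omega0) in
  alpha < 2^-1 ->
  let pstar := invmx H *m g in
  let pt := pcg H Htinv_w g s in
  let rho := (1 - Num.sqrt (1 - alpha / (1 - alpha))) /
             (1 + Num.sqrt (1 - alpha / (1 - alpha))) in
  Hnorm2 H (pt - pstar) / Hnorm2 H pstar <= 4 * rho ^+ s.

Proof.
move=> hm hb Hmeas Hint Hmean Hcov Hiid Hpos Hsm Hle Hlam Hdeff.
move=> n H Htinv_w EHtinv alpha0 alpha1 Omega0 alpha Ha /=.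
have mb0 : (0 < m * b)%N by rewrite muln_gt0 hm hb.
pose r := Ordinal mb0.
have Ss : Sigma^T = Sigma.
  apply/matrixP => i j; rewrite mxE.
  have E : (fun w' => A w' r i * A w' r j) = (fun w' => A w' r j * A w' r i).
    by apply/funext => w'; rewrite mulrC.
  have h1 := Hcov r i j; have h2 := Hcov r j i.
  rewrite E h2 in h1.
  by case: h1.
have Sspec := spectral_real Ss Hpos Hle.
have sm0 : 0 < smax := Hpos _ Hsm.
have Spsd v : 0 <= dotv v (Sigma *m v) by case: (Sspec v).
have Sn v : vnorm (Sigma *m v) <= smax * vnorm v.
  have [_ h] := Sspec v.
  rewrite !vnormE -(ger0_norm (ltW sm0)) -sqrtr_sqr -sqrtrM ?sqr_ge0 //.
  by apply: ler_wsqrtr.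
have [u0 un0] : exists u : 'cV[R]_d, u != 0.
  move/eigenvalueP: Hsm => [v _ vn0]; exists v^T.
  by apply: contra vn0 => /eqP h; rewrite -(trmxK v) h trmx0.
pose G := Sigma - n^-1 *: ((A w)^T *m A w).
have HE : H = Sigma + lam%:M - G.
  rewrite /H /Hmat /G; apply/matrixP => i j; rewrite !mxE.
  rewrite /n; ring.
have Hs : H^T = H.
  by rewrite /H /Hmat linearD /= linearZ /= trmx_mul trmxK tr_scalar_mx.
have Hc v : lam * dotv v v <= dotv v (H *m v).
  rewrite /H /Hmat mulmxDl -scalemxAl mul_scalar_mx dotvDr !dotvZr.
  rewrite -mulmxA -dotv_mull_rect.
  have : 0 <= (m * b)%:R^-1 * dotv (A w *m v) (A w *m v).
    by apply: mulr_ge0; [rewrite invr_ge0 ler0n|exact: dotvvge0].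
  lra.
have npos : 0 < n by rewrite /n ltr0n.
have kap0 : 0 < (1 - m%:R * deff Sigma lam / n)^-1.
  by rewrite invr_gt0 subr_gt0 ltr_pdivrMr // mul1r.
set kap := (1 - m%:R * deff Sigma lam / n)^-1 in kap0.
pose Bm (i : 'I_m) := kap *: ((m%:R / n) *: ((block (A w) i)^T *m block (A w) i)) + lam%:M.
have HtE : Htinv_w = m%:R^-1 *: \sum_(i < m) invmx (Bm i) by reflexivity.
have Bs i : (Bm i)^T = Bm i.
  by rewrite /Bm linearD /= [in LHS]linearZ /= [in LHS]linearZ /= trmx_mul trmxK tr_scalar_mx.
have Bc i v : lam * dotv v v <= dotv v (Bm i *m v).
  rewrite /Bm mulmxDl -!scalemxAl mul_scalar_mx dotvDr !dotvZr.
  rewrite -mulmxA -dotv_mull_rect.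
  have : 0 <= kap * (m%:R / n * dotv (block (A w) i *m v) (block (A w) i *m v)).
    apply: mulr_ge0; first exact: ltW.
    by apply: mulr_ge0; [rewrite divr_ge0 ?ler0n // ltW|exact: dotvvge0].
  lra.
have Bu i : Bm i \in unitmx := unit_coercive (Bs i) Hlam (Bc i).
have BIs i : (invmx (Bm i))^T = invmx (Bm i) by rewrite trmx_inv Bs.
have BIpd i v : v != 0 -> 0 < dotv v (invmx (Bm i) *m v).
  move=> vn0; set u := invmx (Bm i) *m v.
  have vE : v = Bm i *m u by rewrite /u mulmxA mulmxV // mul1mx.
  have un : u != 0 by apply: contra vn0 => /eqP h; rewrite vE h mulmx0.
  rewrite {1}vE dotvC.
  exact: pd_coercive Hlam (Bc i) u un.
have Ms : Htinv_w^T = Htinv_w.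
  rewrite HtE linearZ /= linear_sum /=; congr (_ *: _).
  by apply: eq_bigr => i _; rewrite BIs.
have Mpd v : v != 0 -> 0 < dotv v (Htinv_w *m v).
  move=> vn0; rewrite HtE -scalemxAl mulmx_suml dotvZr dotv_sumr.
  apply: mulr_gt0; first by rewrite invr_gt0 ltr0n.
  rewrite (bigD1 (Ordinal hm)) //=.
  apply: (lt_le_trans (BIpd (Ordinal hm) v vn0)); rewrite lerDl.
  by apply: sumr_ge0 => j _; apply/ltW/BIpd.
have FE : Htinv_w - invmx (Sigma + lam%:M) = (Htinv_w - EHtinv) + Omega0.
  by rewrite /Omega0 addrA subrK.
have Fn v : vnorm ((Htinv_w - invmx (Sigma + lam%:M)) *m v) <=
            (alpha1 + specnorm Omega0) * vnorm v.
  rewrite FE mulmxDl mulrDl; apply: le_trans (vnormD _ _) _.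
  by apply: lerD; apply: specnorm_bound.
have Gn v : vnorm (G *m v) <= alpha0 * vnorm v by apply: specnorm_bound.
have a00 : 0 <= alpha0 := specnorm_ge0 _ un0.
have a10 : 0 <= alpha1 := specnorm_ge0 _ un0.
have om0 : 0 <= specnorm Omega0 := specnorm_ge0 _ un0.
exact: (core g s Ss Spsd Sn (ltW sm0) Hlam HE Hs Gn a00 Hc Ms Mpd Fn a10 om0 Ha).
Qed.
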